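(* Let $n,t\ge1$ and $b\ge1$. Then \[ N_{2,b}^+(n,t)=2^{b}\,I_{2,b}(n,t-1)=2^{t(b-1)+1}\sum_{i=0}^{t-1}\binom{n+t-1}{i}. \]
   Context: $\Sigma_2=\{0,1\}$. A $b$-burst-insertion at position $i\in[1,n+1]$ transforms $x_1\cdots x_n$ into $x_1\cdots x_{i-1}y_1\cdots y_b x_i\cdots x_n$ for arbitrary $y_1\cdots y_b\in\Sigma_2^b$. $\mathcal{I}_{t,b}(\boldsymbol{x})$ is the set of all length-$(n+tb)$ sequences obtainable from $\boldsymbol{x}$ by $t$ successive $b$-burst-insertions ($\mathcal{I}_{0,b}(\boldsymbol{x})=\{\boldsymbol{x}\}$). $I_{2,b}(n,t)=\max\{|\mathcal{I}_{t,b}(\boldsymbol{x})|:\boldsymbol{x}\in\Sigma_2^n\}$ and $N_{2,b}^+(n,t)=\max\{|\mathcal{I}_{t,b}(\boldsymbol{x})\cap\mathcal{I}_{t,b}(\boldsymbol{y})|:\boldsymbol{x}\ne\boldsymbol{y}\in\Sigma_2^n\}$. Convention: $\binom{m}{i}=0$ if $m<i$. *)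

(* Defs.v *)
From mathcomp Require Import all_boot.
Set Implicit Arguments. Unset Strict Implicit. Unset Printing Implicit Defensive.

(* All results of ONE b-burst-insertion into x: insert an arbitrary word
   y of length b after the first i symbols of x, for i = 0..size x
   (i.e. at position i+1 in [1, n+1] in the paper's 1-based indexing). *)
Definition burst_ins (b : nat) (x : seq bool) : seq (seq bool) :=
  [seq take i x ++ val y ++ drop i x
     | i <- iota 0 (size x).+1, y <- enum {: b.-tuple bool}].

Definition Iset (t b : nat) (x : seq bool) : seq (seq bool) :=
  iter t (fun S => undup (flatten (map (burst_ins b) S))) [:: x].

Definition Icard (t b : nat) (x : seq bool) : nat := size (undup (Iset t b x)).

Definition Iinter (t b : nat) (x y : seq bool) : nat :=
  size (undup [seq z <- Iset t b x | z \in Iset t b y]).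

Definition I2 (b n t : nat) : nat :=
  \max_(x : n.-tuple bool) Icard t b x.

Definition N2plus (b n t : nat) : nat :=
  \max_(x : n.-tuple bool) \max_(y : n.-tuple bool | x != y) Iinter t b x y.

(* Main.v *)
Require Import Defs.
From mathcomp Require Import all_boot zify.
Set Implicit Arguments. Unset Strict Implicit. Unset Printing Implicit Defensive.

Definition ins1 (b : nat) (v z : seq bool) :=
  exists p s y, [/\ v = p ++ s, size y = b & z = p ++ y ++ s].

Lemma mem_burst_ins b v z : z \in burst_ins b v <-> ins1 b v z.
Proof.
split.
- case/allpairsP => [[i y] /= [Hi _ ->]].
  exists (take i v), (drop i v), (val y); split => //; first by rewrite cat_take_drop.
  by rewrite size_tuple.
- case=> p [s [y [-> Hy ->]]].
  apply/allpairsP; exists (size p, Tuple (introT eqP Hy)); split.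
  + change (size p \in iota 0 (size (p ++ s)).+1).
    rewrite mem_iota add0n ltnS size_cat; exact: leq_addr.
  + by rewrite /= mem_enum.
  + by rewrite /= take_size_cat // drop_size_cat.
Qed.

Lemma IsetS t b x : Iset t.+1 b x = undup (flatten (map (burst_ins b) (Iset t b x))).
Proof. by rewrite /Iset iterS. Qed.

Lemma mem_IsetS t b x z :
  z \in Iset t.+1 b x <-> exists2 v, v \in Iset t b x & ins1 b v z.
Proof.
rewrite IsetS mem_undup; split.
- case/flattenP => s /mapP [v Hv ->] Hz; exists v => //; exact/mem_burst_ins.
- case=> v Hv /mem_burst_ins Hz; apply/flattenP; exists (burst_ins b v) => //.
  exact: map_f.
Qed.

Lemma mem_Iset0 b x z : (z \in Iset 0 b x) = (z == x).
Proof. by rewrite /Iset /= mem_seq1. Qed.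

Lemma size_Iset t b x z : z \in Iset t b x -> size z = size x + t * b.
Proof.
elim: t z => [|t IH] z; first by rewrite mem_Iset0 => /eqP ->; rewrite addn0.
case/mem_IsetS => v /IH Hv [p [s [y [Ev Hy ->]]]].
move: Hv; rewrite Ev !size_cat Hy => Hv; rewrite mulSn; lia.
Qed.

Lemma Iset_comp r s b x v z :
  v \in Iset r b x -> z \in Iset s b v -> z \in Iset (r + s) b x.
Proof.
move=> Hv; elim: s z => [|s IH] z; first by rewrite mem_Iset0 addn0 => /eqP ->.
case/mem_IsetS => u /IH Hu Hz; rewrite addnS; apply/mem_IsetS; by exists u.
Qed.

Lemma Iset_cat t b w x z : z \in Iset t b x -> w ++ z \in Iset t b (w ++ x).
Proof.
elim: t z => [|t IH] z; first by rewrite !mem_Iset0 => /eqP ->.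
case/mem_IsetS => v /IH Hv [p [s [y [Ev Hy ->]]]].
apply/mem_IsetS; exists (w ++ v) => //.
exists (w ++ p), s, y; split; [rewrite Ev; exact: catA | done | exact: catA].
Qed.

Lemma Iset_front b v y : size y = b -> y ++ v \in Iset 1 b v.
Proof.
move=> Hy; apply/mem_IsetS; exists v; first by rewrite mem_Iset0.
by exists [::], v, y; split.
Qed.

Lemma lemG s b a x u w : 0 < b -> u \in Iset s b (a :: x) -> size w = b.-1 ->
  w ++ u \in Iset s.+1 b x.
Proof.
move=> b0 Hu Hw.
have H1 : w ++ a :: x \in Iset 1 b x.
  by rewrite -cat1s catA; apply: Iset_front; rewrite size_cat Hw /=; lia.
rewrite -add1n; apply: (Iset_comp H1); exact: Iset_cat.
Qed.

Lemma R0 t b z : (z \in Iset t b [::]) = (size z == t * b).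
Proof.
apply/idP/eqP; first by move/size_Iset.
elim: t z => [|t IH] z; first by rewrite mul0n => /size0nil ->; rewrite mem_Iset0.
move=> Hz; rewrite -(cat_take_drop b z); apply/mem_IsetS; exists (drop b z).
  by apply: IH; rewrite size_drop Hz mulSn addKn.
exists [::], (drop b z), (take b z); split => //.
by rewrite size_take Hz mulSn; case: ltnP => //; lia.
Qed.

Lemma cat_split (p s w u : seq bool) : p ++ s = w ++ u ->
  (exists q, p = w ++ q /\ u = q ++ s) \/ (exists r, w = p ++ r /\ s = r ++ u).
Proof.
elim: p w => [|d p IH] w /=; first by move=> ->; right; exists w.
case: w => [|e w] /=; first by move=> <-; left; exists (d :: p).
case=> -> /IH [[q [-> ->]]|[r [-> ->]]]; [left; by exists q | right; by exists r].
Qed.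

Lemma ins1_cat b w u z : ins1 b (w ++ u) z ->
  (exists z', z = w ++ z' /\ ins1 b u z') \/
  (exists w', z = w' ++ u /\ size w' = size w + b).
Proof.
case=> p [s [y [/esym/cat_split [[q [-> ->]]|[r [-> ->]]] Hy ->]]].
- left; exists (q ++ y ++ s); split; first by rewrite -catA.
  by exists q, s, y; split.
- right; exists (p ++ y ++ r); split; first by rewrite -!catA.
  by rewrite !size_cat Hy; lia.
Qed.

Lemma R1 t b a x z : 0 < b -> (a :: z \in Iset t b (a :: x)) = (z \in Iset t b x).
Proof.
move=> b0; apply/idP/idP; last exact: (@Iset_cat t b [:: a]).
elim: t z => [|t IH] z; first by rewrite !mem_Iset0 eqseq_cons eqxx.
case/mem_IsetS => v Hv [p [s [y [Ev Hy Ez]]]].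
case: p Ev Ez => [|d p] Ev Ez.
- case: y Hy Ez => [|c w] Hy; first by move: b0; rewrite -Hy.
  case=> _ ->; apply: (lemG (a:=a) b0); first by move: Hv; rewrite Ev.
  by rewrite -Hy.
- case: Ez => Ead ->; rewrite -Ead in Ev; apply/mem_IsetS; exists (p ++ s); last by exists p, s, y.
  by apply: IH; move: Hv; rewrite Ev.
Qed.

Lemma R2a t b a c x z : 0 < b -> c != a -> c :: z \in Iset t.+1 b (a :: x) ->
  exists w u, [/\ size w = b.-1, u \in Iset t b (a :: x) & z = w ++ u].
Proof.
move=> b0 Hca; elim: t z => [|t IH] z;
  case/mem_IsetS => v Hv [p [s [y [Ev Hy Ez]]]];
  (case: p Ev Ez => [|d p] Ev Ez;
  [ case: y Hy Ez => [|c' w] Hy; first by move: b0; rewrite -Hy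
  | ]).
- case=> _ ->; exists w, s; split => //; [by rewrite -Hy | by move: Hv; rewrite Ev].
- case: Ez => Ecd _; move: Hv; rewrite Ev mem_Iset0 /= eqseq_cons -Ecd.
  by rewrite (negbTE Hca).
- case=> _ ->; exists w, s; split => //; [by rewrite -Hy | by move: Hv; rewrite Ev].
- case: Ez => Edc Ez; move: Hv; rewrite Ev -Edc => /IH [w [u [Hw Hu Epu]]].
  have : ins1 b (w ++ u) z by rewrite -Epu Ez; exists p, s, y.
  case/ins1_cat => [[z' [-> Hz']]|[w' [-> Hw']]].
  + exists w, z'; split => //; apply/mem_IsetS; by exists u.
  + exists (take b.-1 w'), (drop b.-1 w' ++ u); split.
    * rewrite size_take Hw' Hw; case: ltnP => //; lia.
    * rewrite -addn1; apply: (Iset_comp Hu); apply: Iset_front.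
      rewrite size_drop Hw' Hw; lia.
    * by rewrite catA cat_take_drop.
Qed.

Lemma R2 t b a c x z : 0 < b -> c != a -> c :: z \in Iset t.+1 b (a :: x) <->
  exists w u, [/\ size w = b.-1, u \in Iset t b (a :: x) & z = w ++ u].
Proof.
move=> b0 Hca; split; first exact: R2a.
case=> w [u [Hw Hu ->]]; apply/mem_IsetS; exists u => //.
exists [::], u, (c :: w); split => //=; rewrite Hw; lia.
Qed.

Fixpoint words m : seq (seq bool) :=
  if m is m'.+1 then [seq c :: w | c <- [:: true; false], w <- words m']
  else [:: [::]].

Lemma wordsS m : words m.+1 = [seq c :: w | c <- [:: true; false], w <- words m].
Proof. by []. Qed.

Lemma mem_words m w : (w \in words m) = (size w == m).
Proof.
elim: m w => [|m IH] w; first by rewrite /= mem_seq1 size_eq0.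
rewrite wordsS; case: w => [|c w].
  by apply/negbTE/allpairsP => -[[c' w'] [_ _]].
apply/allpairsP/idP => [[[c' w'] /= [_ Hw [_ Ew]]]|Hw].
  by rewrite Ew /= eqSS -IH.
by exists (c, w); split => //=; [case: (c) | rewrite IH -eqSS].
Qed.

Lemma uniq_words m : uniq (words m).
Proof.
elim: m => // m IH; rewrite wordsS; apply: allpairs_uniq => //.
by move=> [c1 w1] [c2 w2] _ _ /= [-> ->].
Qed.

Lemma size_words m : size (words m) = 2 ^ m.
Proof. by elim: m => // m IH; rewrite wordsS size_allpairs IH expnS. Qed.

Fixpoint L (b : nat) (x : seq bool) (t : nat) : seq (seq bool) :=
  match x with
  | [::] => words (t * b)
  | a :: x' => (fix Lt t := match t with
                 | 0 => [:: a :: x']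
                 | t'.+1 => map (cons a) (L b x' t'.+1) ++
                      [seq ~~ a :: w ++ u | w <- words b.-1, u <- Lt t']
                 end) t
  end.

Lemma L0 b x : L b x 0 = [:: x].
Proof. by case: x. Qed.

Lemma LS b a x t : L b (a :: x) t.+1 = map (cons a) (L b x t.+1) ++
   [seq ~~ a :: w ++ u | w <- words b.-1, u <- L b (a :: x) t].
Proof. by []. Qed.

Lemma Lnil b t : L b [::] t = words (t * b).
Proof. by []. Qed.

Lemma cons_inj (a : bool) : injective (cons a).
Proof. by move=> u v [->]. Qed.

Lemma mem_part2 b a (S : seq (seq bool)) c z :
  (c :: z \in [seq ~~ a :: w ++ u | w <- words b.-1, u <- S]) =
  (c == ~~ a) && (size z >= b.-1) && (drop b.-1 z \in S).
Proof.
apply/allpairsP/idP.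
- case=> [[w u] /= [Hw Hu [-> ->]]].
  move: Hw; rewrite mem_words => /eqP Hw.
  by rewrite eqxx size_cat Hw leq_addr /= drop_size_cat.
- case/andP => /andP [/eqP -> Hz] Hd.
  exists (take b.-1 z, drop b.-1 z) => /=; split => //.
  + by rewrite mem_words size_take; case: ltnP Hz => //; lia.
  + by rewrite cat_take_drop.
Qed.

Lemma nil_part2 b a (S : seq (seq bool)) :
  ([::] \in [seq ~~ a :: w ++ u | w <- words b.-1, u <- S]) = false.
Proof. by apply/allpairsP => -[[w u] [_ _]]. Qed.

Lemma mem_part1 a (S : seq (seq bool)) c z :
  (c :: z \in map (cons a) S) = (c == a) && (z \in S).
Proof.
case: (eqVneq c a) => [->|H]; first by rewrite (mem_map (@cons_inj a)).
by apply/mapP => -[u _ [E _]]; move: H; rewrite E eqxx.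
Qed.

Lemma mem_L b x t z : 0 < b -> (z \in L b x t) = (z \in Iset t b x).
Proof.
move=> b0; elim: x z t => [|a x IHx] z t; first by rewrite Lnil mem_words R0.
elim: t z => [|t IHt] z; first by rewrite L0 mem_seq1 ?mem_Iset0.
rewrite LS mem_cat; case: z => [|c z].
  rewrite nil_part2 orbF; apply/mapP/idP => [[u _] //|/size_Iset //].
rewrite mem_part1 mem_part2; case: (eqVneq c a) => [->|Hca].
  by rewrite R1 // IHx (_ : (a == ~~ a) = false) ?orbF //; case: (a).
rewrite /= (_ : c == ~~ a); last by move: Hca; case: (c); case: (a).
apply/idP/idP.
- case/andP => Hz; rewrite IHt => Hd; apply/(R2 _ _ _ b0 Hca).
  exists (take b.-1 z), (drop b.-1 z); split => //; last by rewrite cat_take_drop.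
  by rewrite size_take; move: Hz => /= Hz; case: ltnP Hz => //; lia.
- case/(R2 _ _ _ b0 Hca) => w [u [Hw Hu ->]].
  by rewrite size_cat Hw leq_addr drop_size_cat // IHt.
Qed.

Lemma uniq_part2 b a (S : seq (seq bool)) : uniq S ->
  uniq [seq ~~ a :: w ++ u | w <- words b.-1, u <- S].
Proof.
move=> US; apply: allpairs_uniq => //; first exact: uniq_words.
move=> [w1 u1] [w2 u2] /allpairsP [[w1' u1'] /= [Hw1 _ [-> ->]]].
move=> /allpairsP [[w2' u2'] /= [Hw2 _ [-> ->]]] /= [E].
move: Hw1 Hw2; rewrite !mem_words => /eqP Hw1 /eqP Hw2.
have : w1' ++ u1' == w2' ++ u2' by rewrite E.
by rewrite eqseq_cat ?Hw1 ?Hw2 // => /andP [/eqP -> /eqP ->].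
Qed.

Lemma uniq_L b x t : uniq (L b x t).
Proof.
elim: x t => [|a x IHx] t; first by rewrite Lnil uniq_words.
elim: t => [|t IHt]; first by rewrite L0.
rewrite LS cat_uniq (map_inj_uniq (@cons_inj a)) IHx uniq_part2 // andbT /=.
apply/hasPn => z /allpairsP [[w u] [_ _ ->]] /=.
by rewrite mem_part1; case: (a).
Qed.

Fixpoint F (b n t : nat) : nat :=
  match n with
  | 0 => 2 ^ (t * b)
  | n'.+1 => (fix Ft t := match t with
               | 0 => 1
               | t'.+1 => F b n' t'.+1 + 2 ^ b.-1 * Ft t'
               end) t
  end.

Lemma F0 b n : F b n 0 = 1.
Proof. by case: n. Qed.

Lemma FS b n t : F b n.+1 t.+1 = F b n t.+1 + 2 ^ b.-1 * F b n.+1 t.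
Proof. by []. Qed.

Lemma size_L b x t : size (L b x t) = F b (size x) t.
Proof.
elim: x t => [|a x IHx] t; first by rewrite Lnil size_words.
elim: t => [|t IHt]; first by rewrite L0 F0.
by rewrite LS size_cat size_map size_allpairs size_words IHx IHt.
Qed.

Lemma pascal_sum n t :
  \sum_(i < t.+2) 'C(n.+1 + t.+1, i) =
  \sum_(i < t.+2) 'C(n + t.+1, i) + \sum_(i < t.+1) 'C(n.+1 + t, i).
Proof.
rewrite big_ord_recl bin0 addSn.
rewrite (eq_bigr (fun i : 'I_t.+1 => 'C(n + t.+1, bump 0 i) + 'C(n + t.+1, i)));
  last by move=> i _; rewrite binS.
rewrite big_split /= addnA [in RHS]big_ord_recl bin0 addSnnS.
rewrite [n.+1 + t]addSnnS !add0n addSn.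
by congr (_ + _).+1; apply: eq_bigr.
Qed.

Lemma F_closed b n t : 0 < b ->
  F b n t = 2 ^ (t * b.-1) * \sum_(i < t.+1) 'C(n + t, i).
Proof.
move=> b0; elim: n t => [|n IHn] t.
  have := expnDn 1 1 t.
  rewrite (eq_bigr (fun i : 'I_t.+1 => 'C(t, i))); last by move=> i _; rewrite !exp1n !muln1.
  rewrite add0n; move=> <-; rewrite /= -expnD -mulnSr prednK //.
elim: t => [|t IHt]; first by rewrite F0 big_ord1 bin0.
rewrite FS IHn IHt pascal_sum mulnDr mulnA -expnD -mulSn.
by [].
Qed.

Lemma Icard_L t b x : 0 < b -> Icard t b x = F b (size x) t.
Proof.
move=> b0; rewrite /Icard -size_L; apply: perm_size; apply: uniq_perm.
- exact: undup_uniq.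
- exact: uniq_L.
- by move=> z; rewrite mem_undup mem_L.
Qed.

Lemma Iinter_L t b x y : 0 < b ->
  Iinter t b x y = count (mem (L b y t)) (L b x t).
Proof.
move=> b0; rewrite /Iinter -size_filter; apply: perm_size; apply: uniq_perm.
- exact: undup_uniq.
- exact/filter_uniq/uniq_L.
- move=> z; rewrite mem_undup !mem_filter /= !mem_L //.
Qed.

Lemma neqN (a : bool) : (a == ~~ a) = false.
Proof. by case: a. Qed.

Lemma Nneq (a : bool) : (~~ a == a) = false.
Proof. by case: a. Qed.

Lemma count_allpairs (f : seq bool -> seq bool -> seq bool) s1 (S : seq (seq bool))
   (P Q : pred (seq bool)) :
  (forall w u, w \in s1 -> P (f w u) = Q u) ->
  count P [seq f w u | w <- s1, u <- S] = size s1 * count Q S.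
Proof.
elim: s1 => [|w s1 IH] H //.
rewrite allpairs_cons count_cat IH; last by move=> w' u Hw'; apply: H; rewrite inE Hw' orbT.
rewrite count_map mulSn; congr (_ + _); apply: eq_count => u /=.
by apply: H; rewrite inE eqxx.
Qed.

Lemma mem_L_same b a y t z :
  (a :: z \in L b (a :: y) t.+1) = (z \in L b y t.+1).
Proof. by rewrite LS mem_cat mem_part1 mem_part2 eqxx neqN /= orbF. Qed.

Lemma mem_L_part2 b a y t w u : size w = b.-1 ->
  (~~ a :: w ++ u \in L b (a :: y) t.+1) = (u \in L b (a :: y) t).
Proof.
move=> Hw; rewrite LS mem_cat mem_part1 mem_part2 Nneq eqxx /=.
by rewrite size_cat Hw leq_addr drop_size_cat.
Qed.

Lemma size_part2 b a (S : seq (seq bool)) :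
  size [seq ~~ a :: w ++ u | w <- words b.-1, u <- S] = 2 ^ b.-1 * size S.
Proof. by rewrite size_allpairs size_words. Qed.

Lemma count_upper b x y t : 0 < b -> size x = size y -> x != y ->
  count (mem (L b y t)) (L b x t) <=
  (if t is t'.+1 then 2 ^ b * F b (size x) t' else 0).
Proof.
move=> b0; elim: x y t => [|a x IHx] [|a' y] t Hs Hxy.
- by move: Hxy; rewrite eqxx.
- by move: Hs.
- by move: Hs.
have E2 : 2 ^ b = 2 ^ b.-1 + 2 ^ b.-1 by rewrite addnn -mul2n -expnS prednK.
case: Hs => Hs.
elim: t => [|t IHt]; first by rewrite !L0 /= mem_seq1 (negbTE Hxy).
rewrite [L b (a :: x) t.+1]LS count_cat.
case: (eqVneq a a') => [Eaa|Naa].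
- subst a'.
  have Hxy' : x != y by move: Hxy; rewrite eqseq_cons eqxx.
  have IH1 := IHx y t.+1 Hs Hxy'.
  rewrite count_map.
  have -> : count (preim (cons a) (mem (L b (a :: y) t.+1))) (L b x t.+1) =
            count (mem (L b y t.+1)) (L b x t.+1).
    by apply: eq_count => z; exact: mem_L_same.
  rewrite (@count_allpairs _ _ _ _ (mem (L b (a :: y) t))); last first.
    by move=> w u; rewrite mem_words => /eqP Hw /=; rewrite mem_L_part2.
  rewrite size_words.
  case: t IHt IH1 => [|t] IHt IH1.
  + move: IHt; rewrite leqn0 => /eqP ->; rewrite muln0 addn0.
    by move: IH1; rewrite !F0.
  + change (size (a :: x)) with (size x).+1.
    rewrite FS mulnDr mulnCA; apply: leq_add => //.
    by rewrite leq_mul2l IHt orbT.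
- change (size (a :: x)) with (size x).+1.
  rewrite E2 mulnDl; apply: leq_add.
  + rewrite -size_filter.
    apply: leq_trans (uniq_leq_size (s2 := [seq ~~ a' :: w ++ u | w <- words b.-1,
                                          u <- L b (a' :: y) t]) _ _) _.
    * by apply/filter_uniq; rewrite (map_inj_uniq (@cons_inj a)) uniq_L.
    * move=> z; rewrite mem_filter => /andP [].
      move=> Hz; have : z \in L b (a' :: y) t.+1 by []. rewrite LS mem_cat => /orP [].
      - case/mapP => u _ -> /mapP [v _ [Ea _]]; by move: Naa; rewrite Ea eqxx.
      - by [].
    * by rewrite size_part2 size_L /= Hs.
  + apply: leq_trans (count_size _ _) _.
    by rewrite size_part2 size_L.
Qed.

Lemma count_lower b x t : 0 < b ->
  2 ^ b * F b (size x).+1 t <=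
  count (mem (L b (false :: x) t.+1)) (L b (true :: x) t.+1).
Proof.
move=> b0.
have E2 : 2 ^ b = 2 ^ b.-1 + 2 ^ b.-1 by rewrite addnn -mul2n -expnS prednK.
rewrite [L b (true :: x) t.+1]LS count_cat E2 mulnDl; apply: leq_add.
- rewrite -size_filter.
  have <- : size [seq ~~ false :: w ++ u | w <- words b.-1, u <- L b (false :: x) t]
            = 2 ^ b.-1 * F b (size x).+1 t by rewrite size_part2 size_L.
  apply: uniq_leq_size; first exact/uniq_part2/uniq_L.
  move=> z Hz; rewrite mem_filter; apply/andP; split.
    change (z \in L b (false :: x) t.+1); by rewrite LS mem_cat Hz orbT.
  case/allpairsP: Hz => [[w u] [Hw Hu ->]].
  rewrite mem_part1 /= mem_L //; apply: (lemG (a := false) b0).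
    by rewrite -mem_L //; exact: Hu.
  by move: Hw; rewrite mem_words => /eqP.
- have -> : 2 ^ b.-1 * F b (size x).+1 t =
     size [seq ~~ true :: w ++ u | w <- words b.-1, u <- L b (true :: x) t]
    by rewrite size_part2 size_L.
  apply: eq_leq; apply/esym/eqP; rewrite -all_count; apply/allP => z.
  case/allpairsP => [[w u] [Hw Hu ->]].
  change (false :: w ++ u \in L b (false :: x) t.+1).
  rewrite LS mem_cat mem_part1 /= mem_L //; apply/orP; left.
  apply: (lemG (a := true) b0); first by rewrite -mem_L //; exact: Hu.
  by move: Hw; rewrite mem_words => /eqP.
Qed.

Lemma I2_F b n t : 0 < b -> I2 b n t = F b n t.
Proof.
move=> b0; rewrite /I2; apply/eqP; rewrite eqn_leq; apply/andP; split.
  by apply/bigmax_leqP => x _; rewrite Icard_L // size_tuple.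
apply: leq_trans (leq_bigmax (nseq_tuple n false)).
by rewrite Icard_L // size_tuple.
Qed.

Lemma N2_F b n t : 0 < b -> 0 < n -> N2plus b n t.+1 = 2 ^ b * F b n t.
Proof.
move=> b0 n0; rewrite /N2plus; apply/eqP; rewrite eqn_leq; apply/andP; split.
  apply/bigmax_leqP => x _; apply/bigmax_leqP => y Hxy.
  rewrite Iinter_L //.
  have Hv : val x != val y.
    by apply/negP => /eqP E; move/negP: Hxy; apply; apply/eqP; apply: val_inj.
  have := count_upper t.+1 b0 (etrans (size_tuple x) (esym (size_tuple y))) Hv.
  by rewrite size_tuple.
have Hx : size (true :: nseq n.-1 false) == n by rewrite /= size_nseq prednK.
have Hy : size (false :: nseq n.-1 false) == n by rewrite /= size_nseq prednK.
have Hxy : Tuple Hx != Tuple Hy by [].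
apply: leq_trans (leq_bigmax (Tuple Hx)).
apply: leq_trans (leq_bigmax_cond (Tuple Hy) Hxy).
rewrite Iinter_L //=.
have := count_lower (nseq n.-1 false) t b0.
by rewrite size_nseq prednK.
Qed.

Unset Implicit Arguments.

Theorem mainTheorem4 (n t b : nat) :
  1 <= n -> 1 <= t -> 1 <= b ->
  N2plus b n t = 2 ^ b * I2 b n (t - 1) /\
  2 ^ b * I2 b n (t - 1) =
    2 ^ (t * (b - 1) + 1) * \sum_(i < t) 'C(n + t - 1, i).
Proof.
move=> n0 t0 b0; case: t t0 => [|t] // _.
rewrite subn1 /= I2_F // N2_F //; split => //.
rewrite F_closed // addnS subn1 /= mulnA -expnD; congr (2 ^ _ * _).
  rewrite mulSn; lia.
by rewrite addnS subn1.
Qed.
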